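(* Consider the inexact proximal method described in the context, and assume $F'(x_i)\ne0$ for all iterates considered. Let $\varepsilon>0$ and $K\ge1$ be such that $F(x_k)-F^*\ge\varepsilon$ for $1\le k\le K$. Then for every $1\le k\le K$, $$F(\bar x_k)-F^*\le\frac{L_p\big(\|x_0-x^*\|+\sum_{i=1}^k\delta_i\big)^{p+1}}{k^{\frac{p+1}{2}}}\cdot\frac{(p+1)2^{p-2}V_k(\varepsilon)}{p!},$$ where $\bar x_k=\frac{\sum_{i=1}^ka_ix_i}{\sum_{i=1}^ka_i}$ and $V_k(\varepsilon)=\Big(\frac{\|F'(x_0)\|_*\big(\|x_0-x^*\|+\sum_{i=1}^k\delta_i\big)}{\varepsilon}\Big)^{\frac{p-1}{k}}$.
   Context: $\mathbb{E}$ is a finite-dimensional real vector space with dual $\mathbb{E}^*$; $B:\mathbb{E}\to\mathbb{E}^*$ is a fixed self-adjoint positive-definite operator, $\|x\|=\langle Bx,x\rangle^{1/2}$, $\|g\|_*=\langle g,B^{-1}g\rangle^{1/2}$. Let $p\ge 2$ be an integer, $h:\mathbb{E}\to\mathbb{R}\cup\{+\infty\}$ proper closed convex, and $f$ convex and $p$ times differentiable on an open convex set containing $\operatorname{dom}h$, with $\|D^pf(x)-D^pf(y)\|\le L_p\|x-y\|$ for $x,y\in\operatorname{dom}h$, $0<L_p<\infty$, where for a symmetric $p$-linear form $\|A\|=\max_{\|u\|\le1}|A[u]^p|$. $F=f+h$, attaining its minimum $F^*$ at $x^*\in\operatorname{dom}h$. Inexact proximal method: given $x_0\in\operatorname{dom}h$,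 a fixed subgradient $F'(x_0)\in\partial F(x_0)$, and accuracies $\delta_k\ge0$ ($k\ge1$). For $k\ge0$: set $a_{k+1}=\big(\frac{1}{2\|F'(x_k)\|_*}\big)^{\frac{p-1}{p}}\big(\frac{p!}{(p+1)L_p}\big)^{1/p}$ and $\Phi_{k+1}(x)=a_{k+1}F(x)+\frac12\|x-x_k\|^2$; find $x_{k+1}$ and $g_{k+1}\in\partial\Phi_{k+1}(x_{k+1})$ with $\|g_{k+1}\|_*\le\delta_{k+1}$, and set $F'(x_{k+1})=\frac{1}{a_{k+1}}(g_{k+1}-B(x_{k+1}-x_k))$. *)

(* Defs.v *)
From HB Require Import structures.
From mathcomp Require Import all_boot all_order all_algebra.
From mathcomp Require Import all_classical all_reals all_analysis.
Set Implicit Arguments. Unset Strict Implicit. Unset Printing Implicit Defensive.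
Import Order.TTheory GRing.Theory Num.Theory.
Import numFieldNormedType.Exports.
Local Open Scope classical_set_scope.
Local Open Scope ring_scope.

(* E is modelled as 'rV[R]_n; its dual E^* is also represented by row
   vectors, with the pairing <g, x> = g x^T.  B is an n x n matrix. *)
Section Defs.
Context {R : realType} {n : nat}.

Definition pairing (g x : 'rV[R]_n) : R := (g *m x^T) 0 0.

Definition sym_posdef (B : 'M[R]_n) : Prop :=
  B^T = B /\ forall x : 'rV[R]_n, x != 0 -> 0 < pairing (x *m B) x.

(* ||x|| = <Bx, x>^{1/2}  (Bx is represented by x *m B, B symmetric) *)
Definition Bnorm (B : 'M[R]_n) (x : 'rV[R]_n) : R :=
  Num.sqrt (pairing (x *m B) x).

Definition Bdualnorm (B : 'M[R]_n) (g : 'rV[R]_n) : R :=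
  Num.sqrt (pairing g (g *m invmx B)).

Definition convex_dom (U : set 'rV[R]_n) : Prop :=
  forall (x y : 'rV[R]_n) (t : R), U x -> U y -> 0 <= t <= 1 -> U (t *: x + (1 - t) *: y).

Definition convex_fun_on (U : set 'rV[R]_n) (f : 'rV[R]_n -> R) : Prop :=
  forall (x y : 'rV[R]_n) (t : R), U x -> U y -> 0 <= t <= 1 ->
    f (t *: x + (1 - t) *: y) <= t * f x + (1 - t) * f y.

(* f is k times (Frechet) differentiable on U: f is differentiable on U and
   every directional derivative D_v f is (k-1) times differentiable on U. *)
Fixpoint diffn (k : nat) (U : set 'rV[R]_n) (f : 'rV[R]_n -> R) : Prop :=
  match k with
  | 0 => True
  | k'.+1 => (forall x, U x -> differentiable f x) /\
             forall v : 'rV[R]_n, diffn k' U ('D_v f)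
  end.

(* D^p f(x)[u]^p, the p-th derivative applied to (u,...,u) *)
Definition Dpow (p : nat) (f : 'rV[R]_n -> R) (u : 'rV[R]_n) : 'rV[R]_n -> R :=
  iter p (fun g => 'D_u g) f.

Definition dom (h : 'rV[R]_n -> \bar R) : set 'rV[R]_n :=
  [set x | (h x < +oo)%E].

Definition proper_fun (h : 'rV[R]_n -> \bar R) : Prop :=
  (forall x, h x != -oo%E) /\ exists x, (h x < +oo)%E.

Definition closed_fun (h : 'rV[R]_n -> \bar R) : Prop :=
  closed [set xy : 'rV[R]_n * R | (h xy.1 <= xy.2%:E)%E].

Definition convex_efun (h : 'rV[R]_n -> \bar R) : Prop :=
  forall (x y : 'rV[R]_n) (t : R), 0 < t < 1 ->
    (h (t *: x + (1 - t) *: y)%R <= t%:E * h x + (1 - t)%:E * h y)%E.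

Definition subdiff (phi : 'rV[R]_n -> \bar R) (x : 'rV[R]_n) : set 'rV[R]_n :=
  [set g | phi x \is a fin_num /\
           forall y, (phi x + (pairing g (y - x))%:E <= phi y)%E].

Definition Fobj (f : 'rV[R]_n -> R) (h : 'rV[R]_n -> \bar R) (y : 'rV[R]_n) : \bar R :=
  ((f y)%:E + h y)%E.

Definition Phi (B : 'M[R]_n) (f : 'rV[R]_n -> R) (h : 'rV[R]_n -> \bar R)
  (ak : R) (xk y : 'rV[R]_n) : \bar R :=
  (ak%:E * Fobj f h y + (2^-1 * Bnorm B (y - xk) ^+ 2)%:E)%E.

Definition step (B : 'M[R]_n) (p : nat) (L : R) (Fpk : 'rV[R]_n) : R :=
  (1 / (2 * Bdualnorm B Fpk)) `^ ((p%:R - 1) / p%:R) *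
  ((p`!)%:R / ((p%:R + 1) * L)) `^ (p%:R^-1).

Definition xbar (a : nat -> R) (x : nat -> 'rV[R]_n) (k : nat) : 'rV[R]_n :=
  (\sum_(1 <= i < k.+1) a i)^-1 *: \sum_(1 <= i < k.+1) a i *: x i.

Definition Dk (B : 'M[R]_n) (x0 xstar : 'rV[R]_n) (delta : nat -> R) (k : nat) : R :=
  Bnorm B (x0 - xstar) + \sum_(1 <= i < k.+1) delta i.

Definition Vk (B : 'M[R]_n) (p : nat) (Fp0 x0 xstar : 'rV[R]_n) (delta : nat -> R)
  (eps : R) (k : nat) : R :=
  (Bdualnorm B Fp0 * Dk B x0 xstar delta k / eps) `^ ((p%:R - 1) / k%:R).

End Defs.

(* Main.v *)
Set Warnings "-notation-overridden,-ambiguous-paths,-notation-incompatible-prefix,-deprecated".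
Require Import Defs.
From HB Require Import structures.
From mathcomp Require Import all_boot all_order all_algebra.
From mathcomp Require Import all_classical all_reals all_analysis.
From mathcomp Require Import ring lra.
Import Order.TTheory GRing.Theory Num.Theory.
Import numFieldNormedType.Exports.
Local Open Scope classical_set_scope.
Local Open Scope ring_scope.
Lemma zmod_id (V : zmodType) (x1 xs pg x0 : V) : x1 - xs + (pg - (x1 - x0)) = x0 - xs + pg.
Proof.
by rewrite opprB (addrC (x0 - xs)) addrCA addrA -addrA (addrC (x1 - xs)) [x0 - x1 + _]addrA subrK.
Qed.

Section IP.
Context {R : realType} {n : nat}.
Implicit Types (g x y w : 'rV[R]_n).

Lemma pairingE g x : pairing g x = \sum_j g 0 j * x 0 j.
Proof. by rewrite /pairing mxE; apply: eq_bigr => j _; rewrite mxE. Qed.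

Lemma pairingC g x : pairing g x = pairing x g.
Proof. by rewrite !pairingE; apply: eq_bigr => j _; rewrite mulrC. Qed.

Lemma pairingDl g1 g2 x : pairing (g1 + g2) x = pairing g1 x + pairing g2 x.
Proof. by rewrite !pairingE -big_split; apply: eq_bigr => j _; rewrite mxE mulrDl. Qed.

Lemma pairingZl c g x : pairing (c *: g) x = c * pairing g x.
Proof. by rewrite !pairingE mulr_sumr; apply: eq_bigr => j _; rewrite mxE mulrA. Qed.

Lemma pairingNl g x : pairing (- g) x = - pairing g x.
Proof. by rewrite -scaleN1r pairingZl mulN1r. Qed.

Lemma pairingBl g1 g2 x : pairing (g1 - g2) x = pairing g1 x - pairing g2 x.
Proof. by rewrite pairingDl pairingNl. Qed.

Lemma pairingDr g x1 x2 : pairing g (x1 + x2) = pairing g x1 + pairing g x2.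
Proof. by rewrite pairingC pairingDl !(pairingC g). Qed.
Lemma pairingZr c g x : pairing g (c *: x) = c * pairing g x.
Proof. by rewrite pairingC pairingZl pairingC. Qed.
Lemma pairingBr g x1 x2 : pairing g (x1 - x2) = pairing g x1 - pairing g x2.
Proof. by rewrite pairingC pairingBl !(pairingC g). Qed.
Lemma pairing0l x : pairing 0 x = 0.
Proof. by rewrite -(scale0r 0) pairingZl mul0r. Qed.

Lemma pairing_mulmx (B : 'M[R]_n) w y : pairing (w *m B) y = pairing w (y *m B^T).
Proof. by rewrite /pairing -mulmxA trmx_mul trmxK. Qed.

Variable B : 'M[R]_n.
Hypothesis HB : sym_posdef B.

Definition ip w y := pairing (w *m B) y.

Lemma ipC w y : ip w y = ip y w.
Proof. by rewrite /ip pairing_mulmx (proj1 HB) pairingC. Qed.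
Lemma ipDl w1 w2 y : ip (w1 + w2) y = ip w1 y + ip w2 y.
Proof. by rewrite /ip mulmxDl pairingDl. Qed.
Lemma ipZl c w y : ip (c *: w) y = c * ip w y.
Proof. by rewrite /ip -scalemxAl pairingZl. Qed.
Lemma ipBl w1 w2 y : ip (w1 - w2) y = ip w1 y - ip w2 y.
Proof. by rewrite /ip mulmxBl pairingBl. Qed.
Lemma ipDr w y1 y2 : ip w (y1 + y2) = ip w y1 + ip w y2.
Proof. by rewrite /ip pairingDr. Qed.
Lemma ipZr c w y : ip w (c *: y) = c * ip w y.
Proof. by rewrite /ip pairingZr. Qed.
Lemma ipBr w y1 y2 : ip w (y1 - y2) = ip w y1 - ip w y2.
Proof. by rewrite /ip pairingBr. Qed.

Lemma ip_ge0 w : 0 <= ip w w.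
Proof.
have [->|nz] := eqVneq w 0; first by rewrite /ip mul0mx pairing0l.
exact: ltW ((proj2 HB) w nz).
Qed.

Lemma BnormE w : Bnorm B w = Num.sqrt (ip w w).
Proof. by []. Qed.

Lemma Bnorm_ge0 w : 0 <= Bnorm B w.
Proof. exact: sqrtr_ge0. Qed.

Lemma Bnorm_sqr w : Bnorm B w ^+ 2 = ip w w.
Proof. by rewrite BnormE sqr_sqrtr // ip_ge0. Qed.

Lemma CS w y : ip w y <= Bnorm B w * Bnorm B y.
Proof.
set a := ip w w; set b := ip w y; set c := ip y y.
have quad t : 0 <= a - 2 * t * b + t ^+ 2 * c.
  have := ip_ge0 (w - t *: y).
  rewrite ipBl !ipBr !ipZl !ipZr (ipC y w) -/a -/b -/c.
  by move=> h; nra.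
have key : b ^+ 2 <= a * c.
  have c0 : 0 <= c by exact: ip_ge0.
  have a0 : 0 <= a by exact: ip_ge0.
  have [cz|cp] := eqVneq c 0.
    have b0 : b = 0.
      apply/eqP; apply/negPn/negP => bnz.
      have := quad ((a + 1) / (2 * b)).
      rewrite cz mulr0 addr0.
      have -> : 2 * ((a + 1) / (2 * b)) * b = a + 1.
        by field; exact: bnz.
      lra.
    by rewrite b0 cz; lra.
  have cpos : 0 < c by rewrite lt_def cp c0.
  have := quad (b / c).
  have -> : a - 2 * (b / c) * b + (b / c) ^+ 2 * c = (a * c - b ^+ 2) / c by field.
  rewrite pmulr_lge0 ?invr_gt0 //; lra.
rewrite !BnormE -sqrtrM ?ip_ge0 //.
apply: le_trans (ler_norm b) _.
by rewrite -sqrtr_sqr ler_sqrt // mulr_ge0 ?ip_ge0.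
Qed.

Lemma Bnorm_triangle w y : Bnorm B (w + y) <= Bnorm B w + Bnorm B y.
Proof.
rewrite -(@ler_pXn2r _ 2) ?nnegrE ?addr_ge0 ?Bnorm_ge0 //.
rewrite Bnorm_sqr ipDl !ipDr (ipC y w) sqrrD !Bnorm_sqr.
have := CS w y; lra.
Qed.

Lemma BnormZ c w : Bnorm B (c *: w) = `|c| * Bnorm B w.
Proof. by rewrite !BnormE ipZl ipZr mulrA -expr2 sqrtrM ?sqr_ge0 // sqrtr_sqr. Qed.

Lemma BnormN w : Bnorm B (- w) = Bnorm B w.
Proof. by rewrite -scaleN1r BnormZ normrN normr1 mul1r. Qed.

Lemma B_unit : B \in unitmx.
Proof.
rewrite unitmxE unitfE; apply/negP => /det0P [v vnz vB].
have := (proj2 HB) v vnz; by rewrite vB pairing0l ltxx.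
Qed.

Definition pr g := g *m invmx B.

Lemma pairing_pr g x : pairing g x = ip (pr g) x.
Proof. by rewrite /ip /pr mulmxKV // B_unit. Qed.

Lemma Bdualnorm_pr g : Bdualnorm B g = Bnorm B (pr g).
Proof. by rewrite /Bdualnorm /Bnorm /pr mulmxKV // B_unit. Qed.

Lemma Bdualnorm_gt0 g : g != 0 -> 0 < Bdualnorm B g.
Proof.
move=> gnz; rewrite Bdualnorm_pr BnormE sqrtr_gt0.
apply: (proj2 HB); apply: contra gnz => /eqP h.
by rewrite -(mulmxKV B_unit g) -/(pr g) h mul0mx.
Qed.

Lemma pr_mulB w : pr (w *m B) = w.
Proof. by rewrite /pr mulmxK // B_unit. Qed.

Lemma prD g1 g2 : pr (g1 + g2) = pr g1 + pr g2.
Proof. by rewrite /pr mulmxDl. Qed.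
Lemma prB g1 g2 : pr (g1 - g2) = pr g1 - pr g2.
Proof. by rewrite /pr mulmxBl. Qed.
Lemma prZ c g : pr (c *: g) = c *: pr g.
Proof. by rewrite /pr scalemxAl. Qed.

End IP.

Lemma small_le0 {R : realType} (X Y : R) :
  0 <= Y -> (forall t, 0 < t < 1 -> X <= t * Y) -> X <= 0.
Proof.
move=> Y0 H; rewrite leNgt; apply/negP => X0.
pose t := X / (2 * (X + Y)).
have XY : 0 < X + Y by lra.
have t0 : 0 < t by rewrite /t divr_gt0 // mulr_gt0 //.
have t1 : t < 1 by rewrite /t ltr_pdivrMr ?mulr_gt0 //; lra.
have := H t; rewrite t0 t1 => /(_ isT).
have : t * Y <= X / 2.
  rewrite /t mulrAC ler_pdivrMr ?mulr_gt0 //.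
  have -> : X / 2 * (2 * (X + Y)) = X * (X + Y) by field.
  nra.
lra.
Qed.

Section Conv.
Context {R : realType} {n : nat}.
Variables (B : 'M[R]_n) (U : set 'rV[R]_n) (f : 'rV[R]_n -> R) (h : 'rV[R]_n -> \bar R).
Hypotheses (HB : sym_posdef B) (hprop : proper_fun h) (hconv : convex_efun h)
  (domU : dom h `<=` U) (fconv : convex_fun_on U f).

Definition Fr y := f y + fine (h y).

Lemma dom_fin {y} : dom h y -> h y = (fine (h y))%:E.
Proof.
rewrite /dom /= => hy; apply/esym/fineK.
rewrite fin_numE (proj1 hprop y) /=; by rewrite lt_eqF.
Qed.

Lemma Fobj_fin y : dom h y -> Fobj f h y = (Fr y)%:E.
Proof. by move=> hy; rewrite /Fobj (dom_fin hy). Qed.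

Lemma Phi_fin a xp y : dom h y ->
  Phi B f h a xp y = (a * Fr y + 2^-1 * Bnorm B (y - xp) ^+ 2)%:E.
Proof. by move=> hy; rewrite /Phi Fobj_fin. Qed.

Lemma conv_step y z t : dom h y -> dom h z -> 0 < t < 1 ->
  dom h (t *: y + (1 - t) *: z) /\
  Fr (t *: y + (1 - t) *: z) <= t * Fr y + (1 - t) * Fr z.
Proof.
move=> hy hz /andP[t0 t1].
have {}H := hconv y z t; rewrite t0 t1 /= in H; have {}H := H isT.
rewrite (dom_fin hy) (dom_fin hz) -!EFinM -EFinD in H.
have hd : dom h (t *: y + (1 - t) *: z).
  by rewrite /dom /=; apply: le_lt_trans H _; rewrite ltry.
split => //.
rewrite /Fr.
have Hf := fconv y z t (domU _ hy) (domU _ hz); rewrite (ltW t0) (ltW t1) /= in Hf.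
have {}Hf := Hf isT.
rewrite (dom_fin hd) lee_fin in H.
lra.
Qed.

Lemma subdiff_dom a xp y g : 0 < a -> subdiff (Phi B f h a xp) y g -> dom h y.
Proof.
move=> a0 [fin _]; move: fin; rewrite /Phi /Fobj /dom /=.
have := proj1 hprop y.
case: (h y) => [r| |] //= _; first by rewrite ltry.
by rewrite gt0_muley ?lte_fin.
Qed.

Lemma subgrad a xp xi g z : 0 < a -> subdiff (Phi B f h a xp) xi g -> dom h z ->
  pairing (g - (xi - xp) *m B) (z - xi) <= a * (Fr z - Fr xi).
Proof.
move=> a0 sd hz; have hxi := subdiff_dom _ _ _ _ a0 sd; case: sd => _ sdi.
set d := z - xi; set e := xi - xp.
rewrite pairingBl.
have -> : pairing (e *m B) d = ip B e d by [].
rewrite -subr_le0.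
apply: (@small_le0 _ _ (2^-1 * ip B d d)).
  by rewrite mulr_ge0 ?invr_ge0 ?ler0n ?ip_ge0.
move=> t tt; have [hyt Fyt] := conv_step _ _ _ hz hxi tt.
have := sdi (t *: z + (1 - t) *: xi).
rewrite !Phi_fin // lee_fin.
have E1 : t *: z + (1 - t) *: xi - xi = t *: d.
  by rewrite /d scalerBl scale1r scalerBr addrCA addrC addrK.
have E2 : t *: z + (1 - t) *: xi - xp = e + t *: d.
  by rewrite -E1 /e [RHS]addrC addrA subrK.
rewrite E1 E2 -/e; clearbody d e.
rewrite !Bnorm_sqr // pairingZr ipDl !ipDr !ipZl !ipZr (ipC _ HB d e).
move: tt => /andP[t0 t1].
have Ha : a * Fr (t *: z + (1 - t) *: xi) <= a * (t * Fr z + (1 - t) * Fr xi).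
  by rewrite ler_pM2l.
move=> H.
have H3 : t * (pairing g d - ip B e d - a * (Fr z - Fr xi)) <= t * (t * (2^-1 * ip B d d)).
  nra.
by rewrite ler_pM2l in H3.
Qed.

Lemma sum_pos (a : nat -> R) m : (forall i, (1 <= i <= m.+1)%N -> 0 < a i) ->
  0 < \sum_(1 <= i < m.+2) a i.
Proof.
move=> H; elim: m H => [|m IH] H.
  by rewrite big_nat1 H.
rewrite big_nat_recr //=; apply: addr_gt0.
  by apply: IH => i /andP[i1 im]; apply: H; rewrite i1 /= (leq_trans im).
by apply: H; rewrite leqnn.
Qed.

Lemma jensen (a : nat -> R) (x : nat -> 'rV[R]_n) m :
  (forall i, (1 <= i <= m.+1)%N -> 0 < a i /\ dom h (x i)) ->
  dom h (xbar a x m.+1) /\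
  Fr (xbar a x m.+1) * (\sum_(1 <= i < m.+2) a i) <= \sum_(1 <= i < m.+2) a i * Fr (x i).
Proof.
elim: m => [|m IH] H.
  have [a0 hx] := H 1%N isT.
  have -> : xbar a x 1 = x 1%N.
    by rewrite /xbar !big_nat1 scalerA mulVf ?scale1r // gt_eqF.
  by rewrite !big_nat1 mulrC.
have H' : forall i, (1 <= i <= m.+1)%N -> 0 < a i /\ dom h (x i).
  by move=> i /andP[i1 im]; apply: H; rewrite i1 /= (leq_trans im).
have [hxb Fxb] := IH H'.
have [a0 hx] : 0 < a m.+2 /\ dom h (x m.+2) by apply: H; rewrite leqnn.
set A := \sum_(1 <= i < m.+2) a i.
have A0 : 0 < A by apply: sum_pos => i im; have [] := H' i im.
set t := A / (A + a m.+2).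
have tt : 0 < t < 1.
  apply/andP; split; first by rewrite divr_gt0 // addr_gt0.
  by rewrite ltr_pdivrMr ?addr_gt0 // mul1r ltrDl.
have E : xbar a x m.+2 = t *: xbar a x m.+1 + (1 - t) *: x m.+2.
  rewrite /xbar (big_nat_recr _ _ _ (isT : (1 <= m.+2)%N)) /=.
  rewrite (big_nat_recr _ _ (fun i => a i *: x i) (isT : (1 <= m.+2)%N)) /= -/A.
  rewrite scalerA scalerDr scalerA.
  have AA : A + a m.+2 != 0 by rewrite gt_eqF // addr_gt0.
  have -> : t / A = (A + a m.+2)^-1.
    by rewrite /t; field; rewrite AA gt_eqF.
  have -> : 1 - t = (A + a m.+2)^-1 * a m.+2.
    by rewrite /t; field.
  by [].
have [hd Fd] := conv_step _ _ _ hxb hx tt.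
rewrite -E in hd Fd; split => //.
rewrite (big_nat_recr _ _ _ (isT : (1 <= m.+2)%N)) /= -/A.
rewrite (big_nat_recr _ _ (fun i => a i * Fr (x i)) (isT : (1 <= m.+2)%N)) /=.
have AA : 0 < A + a m.+2 by rewrite addr_gt0.
have e1 : t * (A + a m.+2) = A by rewrite /t mulrAC -mulrA mulfV ?gt_eqF // mulr1.
have e2 : (1 - t) * (A + a m.+2) = a m.+2.
  by rewrite mulrBl mul1r e1 addrC addKr.
apply: le_trans (_ : (t * Fr (xbar a x m.+1) + (1 - t) * Fr (x m.+2)) * (A + a m.+2) <= _).
  by rewrite ler_pM2r.
rewrite mulrDl -mulrA (mulrC (Fr _)) mulrA e1 -mulrA (mulrC (Fr _)) mulrA e2.
by rewrite lerD2r mulrC.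
Qed.

End Conv.
Lemma AGM_nat {R : realType} (E : nat -> R) k : (forall i, (0 < i <= k)%N -> 0 <= E i) ->
  \prod_(1 <= i < k.+1) E i <= ((\sum_(1 <= i < k.+1) E i) / k%:R) ^+ k.
Proof.
move=> E0; rewrite !big_add1 /= !big_mkord.
have := (@leif_AGM R _ predT (fun i : 'I_k => E i.+1) (fun i _ => E0 i.+1 (ltn_ord i))).1.
by rewrite cardT size_enum_ord.
Qed.

Lemma lexp {R : realType} (x y : R) m : 0 <= x -> x <= y -> x ^+ m <= y ^+ m.
Proof. move=> x0 xy; apply: lerXn2r; rewrite ?nnegrE //; exact: le_trans xy. Qed.

Lemma leR {R : numDomainType} (x y : R) : x = y -> x <= y.
Proof. by move->. Qed.

Lemma core {R : realType} (k P : nat) (C A D W eps N0 Nk Pa Pw kr : R) :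
  (0 < k)%N -> kr = k%:R -> 0 < C -> 0 < A -> 0 < D -> 0 <= W -> W <= D ^+ 2 ->
  0 < eps -> 0 < N0 -> 0 < Nk -> eps <= Nk * D -> 0 < Pa -> Pa <= (A / kr) ^+ k ->
  0 < Pw -> Pw ^+ 2 <= (W / kr) ^+ k ->
  Pa * Pw ^+ P * N0 ^+ P = C ^+ k * Nk ^+ P ->
  C ^+ (2 * k) * kr ^+ (P.+2 * k) <= A ^+ (2 * k) * D ^+ (P * (2 * k)) * (N0 * D / eps) ^+ (2 * P).
Proof.
move=> k0 kE C0 A0 D0 W0 WD e0 N00 Nk0 eN Pa0 PaA Pw0 PwW Id.
have kr0 : 0 < kr by rewrite kE ltr0n.
have Ck : C ^+ k = Pa * Pw ^+ P * N0 ^+ P / Nk ^+ P.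
  by rewrite Id mulfK // expf_neq0 // gt_eqF.
have h1 : kr ^+ k * Pa <= A ^+ k.
  by rewrite -ler_pdivlMl ?exprn_gt0 // mulrC -expr_div_n.
have h2 : Pw ^+ 2 * kr ^+ k <= D ^+ (2 * k).
  rewrite -ler_pdivlMr ?exprn_gt0 // exprM -expr_div_n.
  apply: le_trans PwW _.
  apply: lexp; first by rewrite divr_ge0 // ltW.
  by rewrite ler_pM2r ?invr_gt0.
have h2P : (Pw ^+ 2 * kr ^+ k) ^+ P <= (D ^+ (2 * k)) ^+ P.
  by apply: lexp => //; rewrite mulr_ge0 ?exprn_ge0 ?ltW.
have h3 : eps ^+ P <= Nk ^+ P * D ^+ P.
  by rewrite -exprMn; apply: lexp => //; rewrite ltW.
have h1s : (kr ^+ k * Pa) ^+ 2 <= (A ^+ k) ^+ 2.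
  by apply: lexp => //; rewrite mulr_ge0 ?exprn_ge0 ?ltW.
have h3s : (eps ^+ P) ^+ 2 <= (Nk ^+ P * D ^+ P) ^+ 2.
  by apply: lexp => //; rewrite exprn_ge0 ?ltW.
have n1 : 0 <= (Pw ^+ 2 * kr ^+ k) ^+ P by rewrite exprn_ge0 // mulr_ge0 ?sqr_ge0 ?exprn_ge0 ?ltW.
have n2 : 0 <= (kr ^+ k * Pa) ^+ 2 * (Pw ^+ 2 * kr ^+ k) ^+ P by rewrite mulr_ge0 ?sqr_ge0.
have X := ler_pM (mulr_ge0 n2 (sqr_ge0 _)) (sqr_ge0 _)
  (ler_pM n2 (sqr_ge0 _) (ler_pM (sqr_ge0 _) n1 h1s h2P) h3s) (lexx ((N0 ^+ P) ^+ 2)).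
have e1 : C ^+ (2 * k) = (C ^+ k) ^+ 2 by rewrite mulnC exprM.
have e2 : kr ^+ (P.+2 * k) = (kr ^+ k) ^+ P * (kr ^+ k) ^+ 2 by rewrite mulnC exprM -addn2 exprD.
have e3 : A ^+ (2 * k) = (A ^+ k) ^+ 2 by rewrite mulnC exprM.
have e4 : D ^+ (P * (2 * k)) = (D ^+ (2 * k)) ^+ P by rewrite mulnC exprM.
have e5 : (N0 * D / eps) ^+ (2 * P) = ((N0 ^+ P * D ^+ P) / eps ^+ P) ^+ 2.
  by rewrite mulnC exprM; congr (_ ^+ 2); rewrite expr_div_n exprMn.
rewrite e1 e2 e3 e4 e5 Ck.
rewrite !exprMn in X.
have nk0 : 0 < Nk ^+ P by rewrite exprn_gt0.
have ep0 : 0 < eps ^+ P by rewrite exprn_gt0.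
move: X nk0 ep0.
set a1 := Pw ^+ P; set a2 := N0 ^+ P; set a3 := Nk ^+ P; set a4 := kr ^+ k; set a5 := a4 ^+ P;
  set a6 := A ^+ k; set a7 := D ^+ (2 * k) ^+ P; set a8 := eps ^+ P; set a9 := D ^+ P.
move=> X nk0 ep0.
rewrite -(ler_pM2r (_ : 0 < a3 ^+ 2 * a8 ^+ 2)); last by rewrite mulr_gt0 ?exprn_gt0.
apply: le_trans (le_trans _ X) _; apply: leR; field; by rewrite gt_eqF.
Qed.

Lemma powR_exp {R : realType} (x r : R) m : 0 <= x -> (x `^ r) ^+ m = x `^ (r * m%:R).
Proof. by move=> x0; rewrite -powR_mulrn ?powR_ge0 // -powRrM. Qed.

Lemma final_alg {R : realType} (p k : nat) (L A S W D eps N0 Nk Pa Pw : R) :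
  (2 <= p)%N -> (0 < k)%N -> 0 < L -> 0 < A -> 0 <= S -> 0 <= W -> 2 * S + W <= D ^+ 2 ->
  0 < D -> 0 < eps -> 0 < N0 -> 0 < Nk -> eps <= Nk * D -> 0 < Pa -> Pa <= (A / k%:R) ^+ k ->
  0 < Pw -> Pw ^+ 2 <= (W / k%:R) ^+ k ->
  Pa * Pw ^+ (p - 1) * N0 ^+ (p - 1) =
    ((p`!)%:R / ((p%:R + 1) * L) / 2 ^+ (p - 1)) ^+ k * Nk ^+ (p - 1) ->
  S / A <= L * D ^+ p.+1 / (k%:R `^ ((p%:R + 1) / 2)) *
      ((p%:R + 1) * 2 ^+ (p - 2) * (N0 * D / eps) `^ ((p%:R - 1) / k%:R) / (p`!)%:R).
Proof.
case: p => [|[|q]] // _ k0 L0 A0 S0 W0 SWD D0 e0 N00 Nk0 eN Pa0 PaA Pw0 PwW.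
rewrite (_ : (q.+2 - 1 = q.+1)%N); last by rewrite subn1.
rewrite (_ : (q.+2 - 2 = q)%N); last by rewrite !subSS subn0.
set C := _ / _ / _ => Id.
have C0 : 0 < C by rewrite /C !divr_gt0 ?exprn_gt0 ?mulr_gt0 ?ltr0n ?fact_gt0 // addr_gt0.
have kr0 : 0 < (k%:R : R) by rewrite ltr0n.
have CE : C = (q.+2)`!%:R / ((q.+2%:R + 1) * L) / 2 ^+ q.+1 by [].
clearbody C.
set kp := _ `^ _.
have kp0 : 0 < kp by rewrite powR_gt0.
set V := _ `^ _.
have V0 : 0 < V by rewrite powR_gt0 // divr_gt0 // mulr_gt0.
have WD : W <= D ^+ 2 by lra.
have key : C * kp <= A * D ^+ q.+1 * V.
  have := @core R k q.+1 C A D W eps N0 Nk Pa Pw (k%:R) k0 (erefl _) C0 A0 D0 W0 WD e0 N00 Nk0 eN Pa0 PaA Pw0 PwW Id.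
  move=> H.
  rewrite -(@ler_pXn2r _ (2 * k)) ?muln_gt0 ?nnegrE ?(ltW (mulr_gt0 C0 kp0)) ?(ltW (mulr_gt0 (mulr_gt0 A0 (exprn_gt0 _ D0)) V0)) //.
  have e0' := ltW e0; have N0' := ltW N00; have D0' := ltW D0; have k0' := ltW kr0.
  rewrite !exprMn /kp /V !powR_exp ?divr_ge0 ?mulr_ge0 //.
  have -> : (q.+2%:R + 1) / 2 * (2 * k)%:R = (q.+3 * k)%:R :> R.
    by rewrite !natrM natr1 -[in RHS]natr1; field.
  have -> : (q.+2%:R - 1) / k%:R * (2 * k)%:R = (2 * q.+1)%:R :> R.
    rewrite !natrM -[q.+2%:R]natr1 addrK; field; by rewrite gt_eqF.
  rewrite !powR_mulrn ?divr_ge0 ?mulr_ge0 // -exprM.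
  exact: H.
have Dq0 : 0 < D ^+ q by rewrite exprn_gt0.
move: key; rewrite CE !exprS; clear CE.
set Dq := D ^+ q; set tq := 2 ^+ q; set fq := (q.+2)`!%:R; set m := (q.+2)%:R + 1.
have tq0 : 0 < tq by rewrite exprn_gt0.
have fq0 : 0 < fq by rewrite ltr0n fact_gt0.
have m0 : 0 < m by rewrite addr_gt0 ?ltr0n.
move=> key.
rewrite ler_pdivrMr //.
have r1 : 1 <= A * (D * Dq) * V / (fq / (m * L) / (2 * tq) * kp).
  rewrite ler_pdivlMr ?mul1r //; last by rewrite mulr_gt0 // !divr_gt0 ?mulr_gt0.
have -> : L * (D * (D * (D * Dq))) / kp * (m * tq * V / fq) * A =
   (D ^+ 2 / 2) * (A * (D * Dq) * V / (fq / (m * L) / (2 * tq) * kp)).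
  field; rewrite !gt_eqF //.
apply: le_trans (_ : D ^+ 2 / 2 <= _); first by lra.
by rewrite ler_peMr // divr_ge0 ?sqr_ge0.
Qed.

Theorem lemma3 (R : realType) (n p : nat) (B : 'M[R]_n) (L : R)
  (U : set 'rV[R]_n) (f : 'rV[R]_n -> R) (h : 'rV[R]_n -> \bar R)
  (xstar : 'rV[R]_n) (x Fp g : nat -> 'rV[R]_n) (a delta : nat -> R)
  (eps : R) (K : nat) :
  sym_posdef B -> (2 <= p)%N -> 0 < L ->
  proper_fun h -> closed_fun h -> convex_efun h ->
  open U -> convex_dom U -> dom h `<=` U ->
  convex_fun_on U f -> diffn p U f ->
  (forall y z u, dom h y -> dom h z -> Bnorm B u <= 1 ->
     `|Dpow p f u y - Dpow p f u z| <= L * Bnorm B (y - z)) ->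
  dom h xstar -> (forall y, (Fobj f h xstar <= Fobj f h y)%E) ->
  dom h (x 0%N) -> subdiff (Fobj f h) (x 0%N) (Fp 0%N) ->
  (forall k, (1 <= k)%N -> 0 <= delta k) ->
  (forall k, (k < K)%N -> a k.+1 = step B p L (Fp k)) ->
  (forall k, (k < K)%N ->
     subdiff (Phi B f h (a k.+1) (x k)) (x k.+1) (g k.+1) /\
     Bdualnorm B (g k.+1) <= delta k.+1) ->
  (forall k, (k < K)%N ->
     Fp k.+1 = (a k.+1)^-1 *: (g k.+1 - (x k.+1 - x k) *m B)) ->
  (forall i, (i <= K)%N -> Fp i != 0) ->
  0 < eps -> (1 <= K)%N ->
  (forall k, (1 <= k <= K)%N -> (Fobj f h xstar + eps%:E <= Fobj f h (x k))%E) ->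
  forall k, (1 <= k <= K)%N ->
  (Fobj f h (xbar a x k) <=
     Fobj f h xstar +
     (L * Dk B (x 0%N) xstar delta k ^+ p.+1 / (k%:R `^ ((p%:R + 1) / 2)) *
      ((p%:R + 1) * 2 ^+ (p - 2) * Vk B p (Fp 0%N) (x 0%N) xstar delta eps k
       / (p`!)%:R))%:E)%E.
Proof.
move=> HB p2 L0 hprop hclosed hconv Uopen Uconv domU fconv fdiff Lip hxs hmin hx0 sd0
  dpos astep sdk Fpk Fpnz eps0 K1 Fgap k /andP[k1 kK].
have SG := subgrad B U f h HB hprop hconv domU fconv.
set Fs := Fr f h xstar.
set N := fun i => Bdualnorm B (Fp i).
have Npos : forall i, (i <= K)%N -> 0 < N i.
  by move=> i iK; apply: Bdualnorm_gt0 => //; exact: Fpnz.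
set C := (p`!)%:R / ((p%:R + 1) * L) / 2 ^+ (p - 1).
have p0 : (0 < p)%N by apply: leq_trans p2.
have pR0 : 0 < (p%:R : R) by rewrite ltr0n.
have Q0 : 0 < (p`!)%:R / ((p%:R + 1) * L) :> R.
  by rewrite divr_gt0 ?ltr0n ?fact_gt0 // mulr_gt0 // addr_gt0.
have apos : forall i, (i < K)%N -> 0 < a i.+1.
  move=> i iK; rewrite astep // /step; apply: mulr_gt0; apply: powR_gt0 => //.
  by rewrite div1r invr_gt0 mulr_gt0 // Npos // ltnW.
have aN : forall i, (i < K)%N -> a i.+1 * a i.+1 ^+ (p - 1) * N i ^+ (p - 1) = C.
  move=> i iK.
  have Ni := Npos i (ltnW iK).
  have q0 : 0 <= 1 / (2 * N i) by rewrite divr_ge0 // mulr_ge0 // ltW.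
  rewrite -exprS subn1 prednK // astep // /step exprMn !powR_exp //; last exact: ltW.
  have -> : (p%:R - 1) / p%:R * p%:R = (p - 1)%:R :> R.
    by rewrite natrB // mulfVK // gt_eqF.
  have -> : p%:R^-1 * p%:R = 1 :> R by rewrite mulVf // gt_eqF.
  rewrite powRr1; last exact: ltW.
  rewrite powR_mulrn //.
  rewrite /C expr_div_n expr1n exprMn.
  have NN : N i ^+ (p - 1) != 0 by rewrite expf_neq0 // gt_eqF.
  have TT : (2 : R) ^+ (p - 1) != 0 by rewrite expf_neq0.
  rewrite -/(N i) -subn1; field; by rewrite NN TT gt_eqF // ?addr_gt0 // gt_eqF.
have sum_ge0 : forall (F : nat -> R) m, (forall i, (0 < i <= m)%N -> 0 <= F i) ->
    0 <= \sum_(1 <= i < m.+1) F i.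
  move=> F m H; rewrite big_nat_cond; apply: sumr_ge0 => i /andP[/andP[i1 im] _].
  by apply: H; rewrite i1.
have prod_gt0 : forall (F : nat -> R) m, (forall i, (0 < i <= m)%N -> 0 < F i) ->
    0 < \prod_(1 <= i < m.+1) F i.
  move=> F m H; rewrite big_nat_cond; apply: prodr_gt0 => i /andP[/andP[i1 im] _].
  by apply: H; rewrite i1.
have domx : forall j, (j < K)%N -> dom h (x j.+1).
  by move=> j jK; apply: (subdiff_dom B f h hprop _ _ _ _ (apos j jK) (proj1 (sdk j jK))).
pose u := fun j => g j.+1 - (x j.+1 - x j) *m B.
have uE : forall j, (j < K)%N -> u j = a j.+1 *: Fp j.+1.
  by move=> j jK; rewrite Fpk // scalerA mulfV ?gt_eqF ?apos // scale1r.
pose r := fun i => Bnorm B (x i - xstar).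
have gapj : forall j, (j < K)%N -> Fs + eps <= Fr f h (x j.+1).
  move=> j jK; have := Fgap j.+1 jK.
  by rewrite (Fobj_fin f h hprop xstar hxs) (Fobj_fin f h hprop _ (domx j jK)) -EFinD lee_fin.
have ineqA : forall j, (j < K)%N ->
    a j.+1 * (Fr f h (x j.+1) - Fs) <= ip B (pr B (u j)) (x j.+1 - xstar).
  move=> j jK.
  have := SG (a j.+1) (x j) (x j.+1) (g j.+1) xstar (apos j jK) (proj1 (sdk j jK)) hxs.
  rewrite -(pairing_pr B HB) -/(u j) !pairingBr -/Fs => H; lra.
have wE : forall j, (j < K)%N -> Bnorm B (pr B (u j)) = a j.+1 * N j.+1.
  move=> j jK; rewrite uE // prZ BnormZ -(Bdualnorm_pr B HB) ger0_norm //.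
  exact: ltW (apos j jK).
have Ej : forall j, (j < K)%N ->
    r j.+1 ^+ 2 + 2 * (a j.+1 * (Fr f h (x j.+1) - Fs)) + (a j.+1 * N j.+1) ^+ 2
      <= (r j + delta j.+1) ^+ 2.
  move=> j jK.
  have yE : (x j.+1 - xstar) + pr B (u j) = (x j - xstar) + pr B (g j.+1).
    by rewrite /u prB (pr_mulB B HB); exact: zmod_id.
  have n1 : Bnorm B ((x j.+1 - xstar) + pr B (u j)) <= r j + delta j.+1.
    rewrite yE; apply: le_trans (Bnorm_triangle B HB _ _) _.
    by rewrite lerD2l -(Bdualnorm_pr B HB); exact: (proj2 (sdk j jK)).
  have n2 := lexp _ _ 2 (Bnorm_ge0 B _) n1.
  have iA := ineqA j jK; have wEj := wE j jK.
  move: n2 iA wEj; rewrite /r.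
  set y := x j.+1 - xstar; set Uu := pr B (u j); clearbody y Uu => n2 iA wEj.
  have ex : Bnorm B (y + Uu) ^+ 2 = Bnorm B y ^+ 2 + 2 * ip B Uu y + Bnorm B Uu ^+ 2.
    by rewrite !(Bnorm_sqr B HB) ipDl !ipDr (ipC B HB y Uu); ring.
  rewrite ex wEj in n2; lra.
set T := fun m => \sum_(1 <= i < m.+1) (2 * (a i * (Fr f h (x i) - Fs)) + (a i * N i) ^+ 2).
set Dm := fun m => Dk B (x 0%N) xstar delta m.
have tpos : forall i, (0 < i <= k)%N -> 0 <= 2 * (a i * (Fr f h (x i) - Fs)) + (a i * N i) ^+ 2.
  case=> // j /= jk; have jK : (j < K)%N := leq_trans jk kK.
  have ai := apos j jK; have gi := gapj j jK.
  apply: addr_ge0; last exact: sqr_ge0.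
  apply: mulr_ge0 => //; apply: mulr_ge0; [exact: ltW | lra].
have Dpos : forall m, 0 <= Dm m.
  by move=> m; rewrite /Dm /Dk addr_ge0 ?Bnorm_ge0 // sum_ge0 // => i /andP[i1 _]; apply: dpos.
have inv : forall m, (m <= k)%N -> 0 <= T m /\ T m + r m ^+ 2 <= Dm m ^+ 2.
  elim => [|m IH] mk.
    by rewrite /T /Dm /Dk !big_geq // addr0 add0r.
  have [T0 IHT] := IH (ltnW mk).
  have mK : (m < K)%N := leq_trans mk kK.
  have TS : T m.+1 = T m + (2 * (a m.+1 * (Fr f h (x m.+1) - Fs)) + (a m.+1 * N m.+1) ^+ 2).
    by rewrite /T big_nat_recr.
  have DS : Dm m.+1 = Dm m + delta m.+1 by rewrite /Dm /Dk big_nat_recr //= addrA.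
  have tp := tpos m.+1 mk.
  have E := Ej m mK.
  have d0 := dpos m.+1 isT.
  have r0 : 0 <= r m by exact: Bnorm_ge0.
  have D0 := Dpos m.
  have rD : r m <= Dm m by nra.
  rewrite TS DS; split; first by rewrite addr_ge0.
  nra.
have ident : forall m, (m <= k)%N ->
    (\prod_(1 <= i < m.+1) a i) * (\prod_(1 <= i < m.+1) (a i * N i)) ^+ (p - 1) * N 0%N ^+ (p - 1)
    = C ^+ m * N m ^+ (p - 1).
  elim => [|m IH] mk.
    by rewrite !big_geq // expr1n !mul1r.
  have mK := leq_trans mk kK.
  clearbody C.
  rewrite (big_nat_recr m.+1 1 a) // (big_nat_recr m.+1 1 (fun i => a i * N i)) //= !exprMn exprS.
  have := aN m mK; have := IH (ltnW mk).
  set Pa := \prod_(1 <= i < m.+1) a i; set Pw := \prod_(1 <= i < m.+1) (a i * N i).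
  move=> IH' aN'.
  transitivity ((Pa * Pw ^+ (p - 1) * N 0%N ^+ (p - 1)) * (a m.+1 * a m.+1 ^+ (p - 1)) * N m.+1 ^+ (p - 1)).
    by ring.
  by rewrite IH' -aN'; ring.
have [m km] : exists m, k = m.+1 by exists k.-1; rewrite prednK.
subst k.
have mK : (m < K)%N := kK.
have Hj : forall i, (0 < i <= m.+1)%N -> 0 < a i /\ dom h (x i).
  case=> // j /= jk; have jK : (j < K)%N := leq_trans jk kK.
  by split; [exact: apos | exact: domx].
have [jd jF] := jensen U f h hprop hconv domU fconv a x m Hj.
set A := \sum_(1 <= i < m.+2) a i.
set S := \sum_(1 <= i < m.+2) a i * (Fr f h (x i) - Fs).
set W := \sum_(1 <= i < m.+2) (a i * N i) ^+ 2.
have TE : T m.+1 = 2 * S + W by rewrite /T big_split /= -mulr_sumr.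
have [T0 invk] := inv m.+1 (leqnn _).
have r0 : 0 <= r m.+1 by exact: Bnorm_ge0.
have SWD : 2 * S + W <= Dm m.+1 ^+ 2 by rewrite -TE; nra.
have D0' := Dpos m.+1.
have rk : r m.+1 <= Dm m.+1 by nra.
have am := apos m mK.
have Nk0 := Npos m.+1 kK.
have epsN : eps <= N m.+1 * Dm m.+1.
  have iA := ineqA m mK.
  have cs := CS B HB (pr B (u m)) (x m.+1 - xstar).
  rewrite wE // in cs.
  have gm := gapj m mK.
  have e1 : a m.+1 * eps <= a m.+1 * (N m.+1 * r m.+1).
    apply: le_trans (_ : a m.+1 * (Fr f h (x m.+1) - Fs) <= _).
      by rewrite ler_pM2l //; lra.
    by apply: le_trans iA _; rewrite /r mulrA.
  rewrite ler_pM2l // in e1.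
  apply: le_trans e1 _; by rewrite ler_pM2l.
have D0 : 0 < Dm m.+1.
  rewrite lt_def D0' andbT; apply/negP => /eqP D00.
  by move: epsN; rewrite D00 mulr0; lra.
have A0 : 0 < A by apply: sum_pos => i /Hj [].
have S0 : 0 <= S.
  apply: sum_ge0 => i ik; have [ai _] := Hj i ik.
  case: i ik ai => // j jk ai; have jK : (j < K)%N := leq_trans jk kK.
  have := gapj j jK => gi; apply: mulr_ge0; [exact: ltW | lra].
have W0 : 0 <= W by apply: sum_ge0 => i _; exact: sqr_ge0.
have Pa0 : 0 < \prod_(1 <= i < m.+2) a i by apply: prod_gt0 => i /Hj [].
have PaA : \prod_(1 <= i < m.+2) a i <= (A / m.+1%:R) ^+ m.+1.
  by apply: AGM_nat => i /Hj [] /ltW.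
have Pw0 : 0 < \prod_(1 <= i < m.+2) (a i * N i).
  apply: prod_gt0 => i ik; have [ai _] := Hj i ik; apply: mulr_gt0 => //.
  by apply: Npos; case/andP: ik => _ /leq_trans; apply.
have PwW : (\prod_(1 <= i < m.+2) (a i * N i)) ^+ 2 <= (W / m.+1%:R) ^+ m.+1.
  rewrite -prodrXl; apply: AGM_nat => i _; exact: sqr_ge0.
have Id := ident m.+1 (leqnn _).
have N00 := Npos 0%N (leq0n _).
have FA := @final_alg R p m.+1 L A S W (Dm m.+1) eps (N 0%N) (N m.+1) _ _ p2 (ltn0Sn m) L0 A0 S0 W0 SWD D0 eps0 N00 Nk0 epsN Pa0 PaA Pw0 PwW Id.
rewrite (Fobj_fin f h hprop _ jd) (Fobj_fin f h hprop xstar hxs) -EFinD lee_fin.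
have SE : \sum_(1 <= i < m.+2) a i * Fr f h (x i) = S + Fs * A.
  by rewrite /S /A mulr_sumr -big_split /=; apply: eq_bigr => i _; ring.
rewrite SE in jF.
have : Fr f h (xbar a x m.+1) <= Fs + S / A.
  rewrite -ler_pdivlMr // in jF; apply: le_trans jF _.
  by rewrite -/A le_eqVlt; apply/orP; left; apply/eqP; field; rewrite gt_eqF.
move=> H; apply: le_trans H _; rewrite lerD2l.
exact: FA.
Qed.
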